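(* Let $\alpha\in\mathcal{P}(n)$ with $\delta(\alpha)=\big(1,2,\dots,q,q^{(s_q)},(q-1)^{(s_{q-1})},\dots,1^{(s_1)}\big)$, where $q\ge1$, $s_1,\dots,s_q\ge0$. Let $\overline{\alpha}=(\overline{\alpha}_1,\dots,\overline{\alpha}_q)$ with $\overline{\alpha}_i=q-i+1+\sum_{k=i}^q s_k$ and $\underline{\alpha}=\overline{\alpha}^*$. Then the multiset of (nonzero) entries of $\delta(\overline{\alpha})=\delta(\underline{\alpha})$ is equal to the multiset of parts of $\underline{\alpha}$.
   Context: A partition of a positive integer $n$ is a finite non-increasing sequence $\alpha=(\alpha_1,\dots,\alpha_l)$ of positive integers with sum $n$; $\mathcal{P}(n)$ is the set of partitions of $n$, and $\alpha_i=0$ for $i>l$. The diagonal sequence is $\delta(\alpha)=(d_k)_{k\ge1}$ with $d_k=|\{i:1\le i\le k,\ \alpha_i+i-1\ge k\}|$, trailing zeros omitted. $j^{(s)}$ denotes $s$ consecutive entries equal to $j$. The conjugate $\beta^*$ of a partition $\beta$ has parts $\beta^*_j=|\{i:\beta_i\ge j\}|$. *)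

(* Defs.v *)
From mathcomp Require Import all_boot.
Set Implicit Arguments. Unset Strict Implicit. Unset Printing Implicit Defensive.

(* Partitions are sequences of nat; alpha_i (1-based) = nth 0 a (i-1), 0 beyond size. *)
Definition is_partition (n : nat) (a : seq nat) : bool :=
  [&& sorted geq a, all (fun x => 0 < x) a & sumn a == n].

Definition part (a : seq nat) (i : nat) : nat := nth 0 a i.-1.

Definition dk (a : seq nat) (k : nat) : nat :=
  count (fun i => k <= part a i + i - 1) (iota 1 k).

Fixpoint drop0 (s : seq nat) : seq nat :=
  if s is 0 :: s' then drop0 s' else s.

Definition strip_trailing0 (s : seq nat) : seq nat := rev (drop0 (rev s)).

(* the diagonal sequence: d_k for k = 1 .. sumn a + size a (beyond which d_k = 0
   for a partition), trailing zeros omitted *)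
Definition delta (a : seq nat) : seq nat :=
  strip_trailing0 [seq dk a k | k <- iota 1 (sumn a + size a)].

Definition conjp (b : seq nat) : seq nat :=
  [seq count (fun x => j <= x) b | j <- iota 1 (foldr maxn 0 b)].

Definition delta_shape (q : nat) (s : nat -> nat) : seq nat :=
  iota 1 q ++ flatten [seq nseq (s j) j | j <- rev (iota 1 q)].

Definition abar (q : nat) (s : nat -> nat) : seq nat :=
  [seq q - i + 1 + \sum_(i <= k < q.+1) s k | i <- iota 1 q].

(* Main.v *)
Require Import Defs.
From mathcomp Require Import all_boot zify.

Definition cnt (b : seq nat) t := count (fun x => t <= x) b.

Lemma geq_tr : transitive geq.
Proof. move=> x y z h1 h2; exact: leq_trans h2 h1. Qed.

Lemma NM b j : nth 0 b j <= foldr maxn 0 b.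
Proof.
elim: b j => [|x b IH] [|j] //=; first exact: leq_maxl.
exact: leq_trans (IH j) (leq_maxr _ _).
Qed.

Lemma MS b : foldr maxn 0 b <= sumn b.
Proof. elim: b => //= x b IH; lia. Qed.

Lemma NTH b i j : sorted geq b -> i <= j -> nth 0 b j <= nth 0 b i.
Proof.
move=> hs hij; case: (ltnP j (size b)) => hj; last by rewrite nth_default.
have hi : i < size b by exact: leq_ltn_trans hj.
exact: (sorted_leq_nth geq_tr (fun x => leqnn x) 0 hs) hij.
Qed.

Lemma all_nth_le x b j : all (fun y => y <= x) b -> nth 0 b j <= x.
Proof.
move=> /all_nthP H; case: (ltnP j (size b)) => hj; first exact: H.
by rewrite nth_default.
Qed.

Lemma KL b m t : sorted geq b -> 1 <= m -> 1 <= t ->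
  (m <= cnt b t) = (t <= nth 0 b m.-1).
Proof.
rewrite /cnt.
elim: b m => [|x b IH] m hs hm ht /=; first by rewrite nth_nil; apply/idP/idP; lia.
have hb := path_sorted hs.
have ha : all (fun y => y <= x) b by exact: (order_path_min geq_tr hs).
case: (leqP t x) => htx /=.
  case: m hm => [|[|m]] //= _.
  idtac.
  by rewrite add1n ltnS IH.
have -> : count (fun x0 => t <= x0) b = 0.
  rewrite (@eq_in_count _ _ pred0) ?count_pred0 // => y hy /=.
  move/allP: ha => /(_ y hy) hy'. apply: negbTE; rewrite -ltnNge; lia.
case: m hm => [|[|m]] //= _; first by apply/esym/negbTE; rewrite -ltnNge.
apply/esym/negbTE; rewrite -ltnNge; have := @all_nth_le x b m ha; lia.
Qed.

Lemma IC lo hi N : lo <= hi ->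
  count (fun t => (t <= hi) && ~~ (t <= lo)) (iota 1 N) = minn hi N - minn lo N.
Proof.
move=> hlh; elim: N => [|N IH]; first by rewrite /= !minnE; lia.
rewrite (_ : iota 1 N.+1 = iota 1 N ++ [:: N.+1]); last by rewrite -[N.+1]addn1 iotaD addnC.
rewrite count_cat IH /=.
case: (leqP N.+1 hi) => h1; case: (leqP N.+1 lo) => h2 /=; lia.
Qed.

Lemma ML b m N : sorted geq b -> 1 <= m -> nth 0 b 0 <= N ->
  count (fun t => cnt b t == m) (iota 1 N) = nth 0 b m.-1 - nth 0 b m.
Proof.
move=> hs hm hN.
rewrite (@eq_in_count _ _ (fun t => (t <= nth 0 b m.-1) && ~~ (t <= nth 0 b m))).
  have h1 : nth 0 b m <= nth 0 b m.-1 by apply: NTH => //; lia.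
  have h2 : nth 0 b m.-1 <= nth 0 b 0 by apply: NTH.
  rewrite IC //; lia.
move=> t; rewrite mem_iota => /andP [ht _].
have e : (m < cnt b t) = (t <= nth 0 b m) by rewrite KL.
by rewrite eqn_leq KL // (leqNgt (cnt b t)) e andbC.
Qed.

Lemma TR b i j : sorted geq b -> 1 <= i -> 1 <= j ->
  (i <= part (conjp b) j) = (j <= part b i).
Proof.
move=> hs hi hj; rewrite /part /conjp.
case: (ltnP j.-1 (foldr maxn 0 b)) => h.
  rewrite (nth_map 0) ?size_iota // nth_iota // -/(cnt b _) KL //.
  by rewrite add1n prednK.
rewrite nth_default ?size_map ?size_iota //.
apply/idP/idP => H; have := NM b i.-1; lia.
Qed.

Lemma rev_iota1 k : [seq k.+1 - i | i <- iota 1 k] = rev (iota 1 k).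
Proof.
elim: k => [|k IH] //.
rewrite [in RHS](_ : iota 1 k.+1 = iota 1 k ++ [:: k.+1]); last by rewrite -[k.+1]addn1 iotaD addnC.
rewrite rev_cat /= -IH.
rewrite (_ : 2 = 1 + 1) // iotaDl -map_comp.
congr (_ :: _).
Qed.

Lemma DKc b k : sorted geq b -> dk (conjp b) k = dk b k.
Proof.
move=> hs; rewrite /dk.
rewrite (@eq_in_count _ _ (fun i => i <= part b (k.+1 - i))); last first.
  move=> i; rewrite mem_iota => /andP [h1 h2].
  rewrite -TR //; [apply/idP/idP; lia | lia].
rewrite -[in RHS]count_rev -rev_iota1 count_map.
apply: eq_in_count => i; rewrite mem_iota => /andP [h1 h2] /=.

apply/idP/idP; lia.
Qed.

Lemma V b k : foldr maxn 0 b + size b <= k -> dk b k = 0.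
Proof.
move=> h; rewrite /dk (@eq_in_count _ _ pred0) ?count_pred0 //.
move=> i; rewrite mem_iota => /andP [h1 h2] /=; rewrite /part.
case: (ltnP i.-1 (size b)) => h3.
  have := NM b i.-1 => ?; apply/negP => ?; lia.
rewrite nth_default //; apply/negP => ?; lia.
Qed.

Lemma strip_rcons0 s : strip_trailing0 (rcons s 0) = strip_trailing0 s.
Proof. by rewrite /strip_trailing0 rev_rcons. Qed.

Lemma STRIP f M N : (forall k, M < k -> f k = 0) -> M <= N ->
  strip_trailing0 [seq f k | k <- iota 1 N] = strip_trailing0 [seq f k | k <- iota 1 M].
Proof.
move=> hf /subnKC <-; elim: (N - M) => [|t IH]; first by rewrite addn0.
rewrite addnS (_ : iota 1 (M+t).+1 = iota 1 (M+t) ++ [:: (M+t).+1]); last by rewrite -[(M+t).+1]addn1 iotaD /= add1n addn1.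
rewrite map_cat /= hf; last lia.
by rewrite cats1 strip_rcons0.
Qed.

Lemma sumn_conj b : all (fun x => 0 < x) b -> size b <= sumn (conjp b).
Proof.
case: b => [|x b] // hp.
have hx : 0 < x by case/andP: hp.
rewrite /conjp; case E: (foldr maxn 0 (x :: b)) => [|p].
  move: E => /= E; have := leq_maxl x (foldr maxn 0 b); lia.
rewrite /=.
have hb : count (leq 1) b = size b by apply/eqP; rewrite -all_count; case/andP: hp.
rewrite hx hb; lia.
Qed.

Lemma part1 b : sorted geq b -> all (fun x => 0 < x) b -> delta b = delta (conjp b).
Proof.
move=> hs hp; rewrite /delta.
rewrite (eq_map (fun k => @DKc b k hs)).
set M := foldr maxn 0 b + size b.
have hv : forall k, M < k -> dk b k = 0 by move=> k hk; apply: V; lia.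
rewrite (@STRIP _ M _ hv) ?[in RHS](@STRIP _ M _ hv) //.
  rewrite /conjp size_map size_iota -/(conjp b).
  have := @sumn_conj b hp; rewrite /M; lia.
have := MS b; rewrite /M; lia.
Qed.

Lemma leqF m n : n < m -> (m <= n) = false.
Proof. by rewrite ltnNge => /negbTE. Qed.

Definition Sx (q : nat) (s : nat -> nat) m := \sum_(m <= k < q.+1) s k.

Lemma SS q s m : Sx q s m = if m <= q then s m + Sx q s m.+1 else 0.
Proof.
rewrite /Sx; case: leqP => h; first by rewrite big_ltn.
by rewrite big_geq.
Qed.

Lemma Santi q s i j : i <= j -> Sx q s j <= Sx q s i.
Proof.
move=> /subnKC <-; elim: (j - i) => [|d IH]; first by rewrite addn0.
apply: leq_trans IH; rewrite addnS [X in _ <= X]SS.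
case: ifP => h; first exact: leq_addl.
by rewrite SS (@leqF (i+d).+1 q) //; move/negbT: h; rewrite -ltnNge; lia.
Qed.

Lemma PM (f : nat -> nat) q m : 1 <= m ->
  nth 0 [seq f i | i <- iota 1 q] m.-1 = if m <= q then f m else 0.
Proof.
move=> hm; case: leqP => h.
  rewrite (nth_map 0) ?size_iota; last lia.
  rewrite nth_iota; last lia.
  by rewrite add1n prednK.
by rewrite nth_default // size_map size_iota; lia.
Qed.

Lemma PA q s m : 1 <= m -> part (abar q s) m = q.+1 - m + Sx q s m.
Proof.
move=> hm; rewrite /part /abar (PM (fun i => q - i + 1 + Sx q s i)) //.
case: leqP => h; first lia.
rewrite SS leqF //; lia.
Qed.

Definition Sp q s := [seq Sx q s i | i <- iota 1 q].

Lemma PS q s m : 1 <= m -> part (Sp q s) m = Sx q s m.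
Proof.
move=> hm; rewrite /part /Sp PM //.
case: leqP => h //.
by rewrite SS leqF.
Qed.

Lemma sorted_abar q s : sorted geq (abar q s).
Proof.
apply: (homo_sorted (e := ltn)); last exact: iota_ltn_sorted.
move=> x y hxy /=; have := @Santi q s x y (ltnW hxy); rewrite /Sx; move: hxy => /= hxy; lia.
Qed.

Lemma sorted_Sp q s : sorted geq (Sp q s).
Proof.
apply: (homo_sorted (e := ltn)); last exact: iota_ltn_sorted.
by move=> x y hxy /=; apply: Santi; apply: ltnW.
Qed.

Lemma pos_abar q s : all (fun x => 0 < x) (abar q s).
Proof. by apply/allP => x /mapP [i _ ->]; rewrite /=; lia. Qed.

Lemma DKA1 q s k : 1 <= k <= q -> dk (abar q s) k = k.
Proof.
move=> /andP [h1 h2]; rewrite /dk (@eq_in_count _ _ predT) ?count_predT ?size_iota //.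
move=> i; rewrite mem_iota => /andP [i1 i2]; rewrite PA //.
rewrite /predT /=; apply/idP; lia.
Qed.

Lemma DKA2 q s k : q < k -> dk (abar q s) k = cnt (Sp q s) (k - q).
Proof.
move=> h; rewrite /dk.
have -> : iota 1 k = iota 1 q ++ iota (1+q) (k-q) by rewrite -iotaD subnKC // ltnW.
rewrite count_cat.
rewrite [X in _ + X](@eq_in_count _ _ pred0) ?count_pred0 ?addn0; last first.
  move=> i; rewrite mem_iota => /andP [i1 i2]; rewrite PA; last lia.
  rewrite SS (@leqF i q); last lia.
  by apply: leqF; lia.
rewrite /cnt /Sp count_map.
apply: eq_in_count => i; rewrite mem_iota => /andP [i1 i2]; rewrite PA //=.
apply/idP/idP => ?; lia.
Qed.

Lemma strip_count (p : pred nat) s : ~~ p 0 -> count p (strip_trailing0 s) = count p s.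
Proof.
move=> hp; rewrite /strip_trailing0 count_rev -[in RHS](count_rev p s).
elim: (rev s) => [|[|y] x IH] //=.
by rewrite (negbTE hp).
Qed.

Lemma MAXH b : sorted geq b -> foldr maxn 0 b = nth 0 b 0.
Proof.
case: b => [|x b] // hs /=.
have ha : all (fun y => y <= x) b by exact: (order_path_min geq_tr hs).
elim: b ha {hs} => [|y b IH] /=; first by rewrite maxn0.
move=> /andP [hy ha]; have := IH ha; lia.
Qed.

Lemma part2 q s : 1 <= q ->
  perm_eq [seq x <- delta (abar q s) | x != 0] (conjp (abar q s)).
Proof.
move=> hq; set a := abar q s.
have hs : sorted geq a := sorted_abar q s.
have sa : size a = q by rewrite size_map size_iota.
have hsum : q + Sx q s 1 <= sumn a.
  have := NM a 0; have := MS a; have := @PA q s 1 (leqnn 1); rewrite /part /= -/a; lia.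
apply/allP => m _; apply/eqP.
case: m => [|m].
  have -> : count_mem 0 [seq x <- delta a | x != 0] = 0.
    by apply/count_memPn; rewrite mem_filter.
  apply/esym/count_memPn/mapP => [[t]]; rewrite mem_iota => /andP [t1 t2] h.
  have := @KL a 1 t hs (leqnn 1) t1.
  rewrite /cnt -h /= -MAXH //; lia.
rewrite count_filter (@eq_count _ _ (pred1 m.+1)); last by move=> x /=; case: eqP => // ->.
rewrite /delta strip_count // sa addnC iotaD map_cat count_cat !count_map.
rewrite (@eq_in_count _ (preim (dk a) (pred1 m.+1)) (pred1 m.+1) (iota 1 q)); last first.
  by move=> k; rewrite mem_iota => /andP [k1 k2] /=; rewrite DKA1 //; apply/andP; split => //; lia.
rewrite count_uniq_mem ?iota_uniq // mem_iota.
rewrite [iota (1 + q) _](_ : _ = map (addn q) (iota 1 (sumn a))); last by rewrite addnC iotaDl.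
rewrite count_map.
rewrite (@eq_in_count _ _ (fun t => cnt (Sp q s) t == m.+1)); last first.
  by move=> t; rewrite mem_iota => /andP [k1 k2] /=; rewrite DKA2 ?addKn //; lia.
rewrite ML ?sorted_Sp //; last first.
  have := @PS q s 1 (leqnn 1); rewrite /part /=; lia.
rewrite (@eq_in_count _ _ (fun t => cnt a t == m.+1)) // ML //; last exact: NM.
have e1 : nth 0 (Sp q s) m = Sx q s m.+1 by exact: (@PS q s m.+1).
have e2 : nth 0 (Sp q s) m.+1 = Sx q s m.+2 by exact: (@PS q s m.+2).
have e3 : nth 0 a m = q.+1 - m.+1 + Sx q s m.+1 by exact: (@PA q s m.+1).
have e4 : nth 0 a m.+1 = q.+1 - m.+2 + Sx q s m.+2 by exact: (@PA q s m.+2).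
rewrite /= e1 e2 e3 e4 (SS q s m.+1) (SS q s m.+2).
case: (leqP m.+1 q) => h1; case: (leqP m.+2 q) => h2 /=; lia.
Qed.

Theorem corollary2p6 (n : nat) (alpha : seq nat) (q : nat) (s : nat -> nat) :
  is_partition n alpha -> 1 <= q ->
  delta alpha = delta_shape q s ->
  delta (abar q s) = delta (conjp (abar q s)) /\
  perm_eq [seq x <- delta (abar q s) | x != 0] (conjp (abar q s)).
Proof.
move=> _ hq _; split; first exact: part1 (sorted_abar q s) (pos_abar q s).
exact: part2.
Qed.
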